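(* Let $A:\ell_2\to\ell_2$ be a bounded operator with matrix $(a_{m,n})_{m,n\ge0}$, $a_{m,n}=\langle Ae_n,e_m\rangle$, where $(e_n)$ is the canonical basis. Let $(d_n)_{n\ge0}$ be positive numbers such that for all $m,n$: $d_m<d_n\Rightarrow a_{m,n}=0$. Then the matrix $\big(d_m^{-1}a_{m,n}d_n\big)_{m,n}$ (i.e. $D^{-1}AD$ with $D$ the diagonal operator $De_n=d_ne_n$) defines a bounded operator on $\ell_2$ and $\|D^{-1}AD\|\le\|A\|$. *)

(* Defs.v *)
From HB Require Import structures.
From mathcomp Require Import all_boot all_order all_algebra.
From mathcomp Require Import all_classical all_reals all_analysis.
From mathcomp Require Import complex.
Set Implicit Arguments. Unset Strict Implicit. Unset Printing Implicit Defensive.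
Import Order.TTheory GRing.Theory Num.Theory.
Local Open Scope ring_scope.

Section L2.
Variable R : realType.

Definition csq (z : R[i]) : R := (complex.Re z) ^+ 2 + (complex.Im z) ^+ 2.

Definition l2sq (x : nat -> R[i]) : \bar R :=
  (\sum_(0 <= k <oo) (csq (x k))%:E)%E.

Definition in_l2 (x : nat -> R[i]) : Prop := (l2sq x < +oo)%E.

Definition basis_vec (n : nat) : nat -> R[i] := fun k => (k == n)%:R.

Definition l2_linear (A : (nat -> R[i]) -> (nat -> R[i])) : Prop :=
  (forall x, in_l2 x -> in_l2 (A x)) /\
  (forall x y, in_l2 x -> in_l2 y -> A (fun k => x k + y k) = (fun k => A x k + A y k)) /\
  (forall (c : R[i]) x, in_l2 x -> A (fun k => c * x k) = (fun k => c * A x k)).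

Definition bounded_by (A : (nat -> R[i]) -> (nat -> R[i])) (M : R) : Prop :=
  0 <= M /\ forall x, in_l2 x -> (l2sq (A x) <= (M ^+ 2)%:E * l2sq x)%E.

Definition bounded_op (A : (nat -> R[i]) -> (nat -> R[i])) : Prop :=
  l2_linear A /\ exists M, bounded_by A M.

Definition mat_entry (A : (nat -> R[i]) -> (nat -> R[i])) (m n : nat) : R[i] :=
  A (basis_vec n) m.

End L2.

(* Main.v *)
Require Import Defs.
From HB Require Import structures.
From mathcomp Require Import all_boot all_order all_algebra.
From mathcomp Require Import all_classical all_reals all_analysis.
From mathcomp Require Import complex.
From mathcomp Require Import ring lra.
Import Order.TTheory GRing.Theory Num.Theory.
Local Open Scope ring_scope.
Notation cRe := complex.Re.
Notation cIm := complex.Im.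

Section S.
Variable R : realType.
Lemma cReD (x y : R[i]) : cRe (x + y) = cRe x + cRe y. Proof. by case: x => a b; case: y => c d. Qed.
Lemma cImD (x y : R[i]) : cIm (x + y) = cIm x + cIm y. Proof. by case: x => a b; case: y => c d. Qed.
Lemma cReM (x y : R[i]) : cRe (x * y) = cRe x * cRe y - cIm x * cIm y. Proof. by case: x => a b; case: y => c d. Qed.
Lemma cImM (x y : R[i]) : cIm (x * y) = cRe x * cIm y + cIm x * cRe y. Proof. case: x => a b; case: y => c d /=. ring. Qed.
Lemma Re_sum (I : Type) (r : seq I) (P : pred I) (F : I -> R[i]) :
  cRe (\sum_(i <- r | P i) F i) = \sum_(i <- r | P i) cRe (F i).
Proof. by apply: (big_morph _ (@cReD)). Qed.
Lemma Im_sum (I : Type) (r : seq I) (P : pred I) (F : I -> R[i]) :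
  cIm (\sum_(i <- r | P i) F i) = \sum_(i <- r | P i) cIm (F i).
Proof. by apply: (big_morph _ (@cImD)). Qed.
Lemma cReC (c : R) (z : R[i]) : cRe (c%:C%C * z) = c * cRe z.
Proof. case: z => a b /=. ring. Qed.
Lemma cImC (c : R) (z : R[i]) : cIm (c%:C%C * z) = c * cIm z.
Proof. case: z => a b /=. ring. Qed.

Lemma jensenR (I : eqType) (r : seq I) (c a : I -> R) :
  {in r, forall i, 0 <= c i} -> \sum_(i <- r) c i = 1 ->
  (\sum_(i <- r) c i * a i) ^+ 2 <= \sum_(i <- r) c i * a i ^+ 2.
Proof.
move=> c0 c1; set mu := \sum_(i <- r) c i * a i.
have H : 0 <= \sum_(i <- r) c i * (a i - mu) ^+ 2.
  by rewrite big_seq; apply: sumr_ge0 => i /c0 h; rewrite mulr_ge0 // sqr_ge0.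
have E : \sum_(i <- r) c i * (a i - mu) ^+ 2 =
   \sum_(i <- r) c i * a i ^+ 2 - (2 * mu) * mu + mu ^+ 2 * \sum_(i <- r) c i.
  rewrite (eq_bigr (fun i => (c i * a i ^+ 2 - (2 * mu) * (c i * a i)) + mu ^+ 2 * c i)); last by move=> i _; ring.
  by rewrite big_split /= sumrB -!mulr_sumr.
rewrite c1 in E.
move: H; rewrite E; lra.
Qed.

Lemma jensenC (I : eqType) (r : seq I) (c : I -> R) (W : I -> R[i]) :
  {in r, forall i, 0 <= c i} -> \sum_(i <- r) c i = 1 ->
  csq (\sum_(i <- r) (c i)%:C%C * W i) <= \sum_(i <- r) c i * csq (W i).
Proof.
move=> c0 c1; rewrite /csq Re_sum Im_sum.
under eq_bigr do rewrite cReC. under [in X in _ + X <= _]eq_bigr do rewrite cImC.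
rewrite [X in _ <= X](eq_bigr (fun i => c i * cRe (W i) ^+ 2 + c i * cIm (W i) ^+ 2)); last by move=> i _; ring.
by rewrite big_split /= lerD // jensenR.
Qed.
Lemma path_le_last (x0 : R) l : path <=%R x0 l -> x0 <= last x0 l.
Proof.
elim: l x0 => [|y l IH] x0 //= /andP[h1 h2].
exact: le_trans h1 (IH _ h2).
Qed.
Lemma path_mem_last (x0 : R) l : path <=%R x0 l -> forall a, a \in l -> a <= last x0 l.
Proof.
elim: l x0 => [|y l IH] x0 //= /andP[h1 h2] a; rewrite inE => /orP[/eqP->|al].
  exact: path_le_last.
exact: IH.
Qed.

Lemma rep (l : seq R) : path <=%R 0 l ->
 exists ps : seq (R * R),
   [/\ forall p, p \in ps -> 0 <= p.2, \sum_(p <- ps) p.2 = last 0 l,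
       forall p, p \in ps -> p.1 <= last 0 l &
       forall a, a \in l -> \sum_(p <- ps) p.2 * (p.1 <= a)%R%:R = a].
Proof.
elim/last_ind: l => [|l x IH]; first by move=> _; exists [::]; split => //; rewrite big_nil.
rewrite rcons_path => /andP[Hl Hx]; have [ps [P1 P2 P3 P4]] := IH Hl.
set L := last 0 l in Hx P2 P3.
exists (rcons ps (x, x - L)); rewrite last_rcons; split.
- move=> p; rewrite mem_rcons inE => /orP[/eqP->/=|/P1//]; by rewrite subr_ge0.
- by rewrite -cats1 big_cat big_seq1 /= P2; ring.
- move=> p; rewrite mem_rcons inE => /orP[/eqP->//|/P3 h]; exact: le_trans h Hx.
- move=> a; rewrite mem_rcons inE -cats1 big_cat big_seq1 /= => /orP[/eqP->|al].
    rewrite lexx mulr1 (eq_big_seq (fun p : R * R => p.2)) ?P2; first by ring.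
    by move=> p /P3 h; rewrite (le_trans h Hx) mulr1.
  rewrite P4 //; have aL : a <= L by exact: path_mem_last.
  case: (leP x a) => xa; last by rewrite mulr0 addr0.
  have -> : x = L by apply/eqP; rewrite eq_le Hx (le_trans xa aL).
  by rewrite subrr mul0r addr0.
Qed.
Lemma cM (x y : R) : ((x * y)%:C = x%:C * y%:C)%C.
Proof. by rewrite rmorphM. Qed.
Lemma cS (I : Type) (r : seq I) (F : I -> R) : ((\sum_(i <- r) F i)%:C = \sum_(i <- r) (F i)%:C)%C.
Proof. by rewrite rmorph_sum. Qed.
Lemma csqM (r : R) (z : R[i]) : csq (r%:C%C * z) = r ^+ 2 * csq z.
Proof. case: z => a b; rewrite /csq /=. ring. Qed.
Lemma csq_ge0 (z : R[i]) : 0 <= csq z.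
Proof. by rewrite /csq addr_ge0 // sqr_ge0. Qed.
End S.

Lemma core (R : realType) (a : nat -> nat -> R[i]) (d : nat -> R) (M : R) :
  (forall n, 0 < d n) -> (forall m n, d m < d n -> a m n = 0) ->
  (forall (y : nat -> R[i]) K N, \sum_(0 <= m < K) csq (\sum_(0 <= n < N) a m n * y n)
      <= M ^+ 2 * \sum_(0 <= n < N) csq (y n)) ->
  forall (x : nat -> R[i]) K N,
   \sum_(0 <= m < K) csq (\sum_(0 <= n < N) ((d m)^-1)%:C%C * a m n * (d n)%:C%C * x n)
      <= M ^+ 2 * \sum_(0 <= n < N) csq (x n).
Proof.
move=> Hd Htri HA x K N.
pose t := fun k => d k ^+ 2.
pose l := sort <=%R [seq t k | k <- iota 0 (K + N)].
have Pl : path <=%R 0 l.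
  rewrite path_sortedE; last exact: le_trans.
  rewrite sort_sorted ?andbT; last exact: le_total.
  apply/allP => y; rewrite mem_sort => /mapP[k _ ->]; exact: sqr_ge0.
have [ps [P1 _ _ P4]] := @rep _ _ Pl.
have tl k : (k < K + N)%N -> t k \in l by move=> h; rewrite mem_sort map_f // mem_iota.
pose e := fun (p : R * R) k => ((p.1 <= t k)%R)%:R : R.
have F1 k : (k < K + N)%N -> \sum_(p <- ps) p.2 * e p k = t k.
  by move=> h; exact: P4 (tl k h).
have dn0 k : d k != 0 by rewrite gt_eqF.
have e2 p k : e p k * e p k = e p k by rewrite /e; case: (p.1 <= t k)%R; rewrite ?mulr0 ?mulr1.
have e_le1 p k : e p k <= 1 by rewrite /e; case: (p.1 <= t k)%R.
have e_ge0 p k : 0 <= e p k by rewrite /e; case: (p.1 <= t k)%R.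
pose Z := fun p m => \sum_(0 <= n < N) a m n * ((e p n / d n)%:C%C * x n).
have Hrow m : (m < K)%N -> \sum_(0 <= n < N) ((d m)^-1)%:C%C * a m n * (d n)%:C%C * x n
     = \sum_(p <- ps) ((p.2 * e p m / d m)%:C%C * Z p m).
  move=> mK; rewrite /Z.
  under [RHS]eq_bigr do rewrite mulr_sumr.
  rewrite exchange_big /= big_nat [RHS]big_nat; apply: eq_bigr => n /andP[_ nN].
  transitivity ((\sum_(p <- ps) p.2 * e p m / d m * (e p n / d n))%:C%C * a m n * x n); last first.
    rewrite cS big_distrl big_distrl /=; apply: eq_bigr => p _; rewrite !cM; ring.
  have [lt|le] := ltP (d m) (d n); first by rewrite Htri // !mulr0 !mul0r.
  have tnm : t n <= t m by rewrite /t lerXn2r // ?nnegrE ltW.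
  rewrite (eq_bigr (fun p : R * R => p.2 * e p n / (d m * d n))); last first.
    move=> p _; have h2 : e p m * e p n = e p n.
      rewrite /e; case: (leP p.1 (t n)) => h; last by rewrite mulr0.
      by rewrite (le_trans h tnm) mulr1.
    transitivity (p.2 * (e p m * e p n) / (d m * d n)); last by rewrite h2.
    by field; rewrite ?dn0.
  rewrite -mulr_suml F1; last by rewrite ltn_addl.
  have -> : t n / (d m * d n) = (d m)^-1 * d n by rewrite /t; field; rewrite ?dn0.
  rewrite cM; ring.
have Hjen m : (m < K)%N -> csq (\sum_(p <- ps) (p.2 * e p m / d m)%:C%C * Z p m)
     <= \sum_(p <- ps) p.2 * csq (Z p m).
  move=> mK.
  rewrite (eq_bigr (fun p : R * R => (p.2 * e p m / d m ^+ 2)%:C%C * ((d m)%:C%C * Z p m))); last first.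
    move=> p _; rewrite mulrA -cM; congr (_%:C%C * _); by field; rewrite dn0.
  apply: le_trans (@jensenC _ _ ps (fun p => p.2 * e p m / d m ^+ 2) _ _ _) _.
  - by move=> p /P1 h; apply: divr_ge0 (mulr_ge0 h (e_ge0 _ _)) (sqr_ge0 _).
  - rewrite -mulr_suml F1; last by rewrite ltn_addr.
    by rewrite /t mulfV // expf_neq0.
  rewrite big_seq [X in _ <= X]big_seq; apply: ler_sum => p /P1 h; rewrite csqM.
  have c0 := @csq_ge0 _ (Z p m).
  have -> : p.2 * e p m / d m ^+ 2 * (d m ^+ 2 * csq (Z p m)) = p.2 * e p m * csq (Z p m).
    by field; rewrite dn0.
  rewrite -mulrA; apply: (ler_wpM2l h); rewrite -[X in _ <= X]mul1r; exact: (ler_wpM2r c0 (e_le1 p m)).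
have step1 : \sum_(0 <= m < K) csq (\sum_(0 <= n < N) ((d m)^-1)%:C%C * a m n * (d n)%:C%C * x n)
   <= \sum_(0 <= m < K) \sum_(p <- ps) p.2 * csq (Z p m).
  rewrite big_nat [X in _ <= X]big_nat; apply: ler_sum => m /andP[_ mK]; rewrite Hrow //; exact: Hjen.
apply: le_trans step1 _.
rewrite exchange_big /=.
have step2 : \sum_(p <- ps) \sum_(0 <= m < K) p.2 * csq (Z p m)
   <= \sum_(p <- ps) p.2 * (M ^+ 2 * \sum_(0 <= n < N) csq ((e p n / d n)%:C%C * x n)).
  rewrite big_seq [X in _ <= X]big_seq; apply: ler_sum => p /P1 h; rewrite -mulr_sumr.
  by apply: (ler_wpM2l h); exact: HA.
apply: le_trans step2 _; rewrite le_eqVlt; apply/orP; left; apply/eqP.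
rewrite (eq_bigr (fun p : R * R => \sum_(0 <= n < N) p.2 * (M ^+ 2 * csq ((e p n / d n)%:C%C * x n)))); last by move=> p _; rewrite !mulr_sumr.
rewrite exchange_big /= mulr_sumr big_nat [RHS]big_nat; apply: eq_bigr => n /andP[_ nN].
under eq_bigr do rewrite csqM.
rewrite (eq_bigr (fun p : R * R => M ^+ 2 * csq (x n) / d n ^+ 2 * (p.2 * e p n))); last first.
  move=> p _; transitivity (M ^+ 2 * csq (x n) / d n ^+ 2 * (p.2 * (e p n * e p n))); last by rewrite e2.
  by field; rewrite dn0.
rewrite -mulr_sumr F1; last by rewrite ltn_addl.
by rewrite /t; field; rewrite dn0.
Qed.

Lemma l2sq_fin (R : realType) (x : nat -> R[i]) N : (forall k, (N <= k)%N -> x k = 0) ->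
  l2sq x = (\sum_(0 <= k < N) csq (x k))%:E.
Proof.
move=> h; rewrite /l2sq (@nneseries_split _ _ 0 N); last by move=> k _; rewrite lee_fin csq_ge0.
rewrite add0n (eseries0 (N:=N)) ?adde0 ?sumEFin // => i Ni _.
by rewrite h // /csq /= expr0n /= addr0.
Qed.
Lemma l2sq_ge (R : realType) (x : nat -> R[i]) N : ((\sum_(0 <= k < N) csq (x k))%:E <= l2sq x)%E.
Proof.
rewrite -sumEFin; by apply: (nneseries_lim_ge (P := xpredT)) => k _ _; rewrite lee_fin csq_ge0.
Qed.

Lemma basis_sum (R : realType) (y : nat -> R[i]) N k :
  \sum_(0 <= n < N) y n * basis_vec R n k = if (k < N)%N then y k else 0.
Proof.
elim: N => [|N IH]; first by rewrite big_nil.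
rewrite big_nat_recr //= IH /basis_vec ltnS.
by case: (ltngtP k N) => h /=; rewrite ?mulr0 ?addr0 ?mulr1 ?add0r // h.
Qed.

Lemma A_fin (R : realType) (A : (nat -> R[i]) -> (nat -> R[i])) M :
  l2_linear A -> bounded_by A M ->
  forall (y : nat -> R[i]) K N, \sum_(0 <= m < K) csq (\sum_(0 <= n < N) mat_entry A m n * y n)
      <= M ^+ 2 * \sum_(0 <= n < N) csq (y n).
Proof.
move=> [Hl2 [HD HZ]] [M0 HM] y K N.
pose xN N := fun k => \sum_(0 <= n < N) y n * basis_vec R n k.
have xN_l2 N' : in_l2 (xN N').
  rewrite /in_l2 (@l2sq_fin _ _ N') ?ltry // => k kN; rewrite /xN basis_sum.
  by rewrite ltnNge kN.
have e_l2 (c : R[i]) n : in_l2 (fun k => c * basis_vec R n k).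
  rewrite /in_l2 (@l2sq_fin _ _ n.+1) ?ltry // => k kN.
  by rewrite /basis_vec gtn_eqF ?mulr0.
have Aval N' : A (xN N') = fun m => \sum_(0 <= n < N') mat_entry A m n * y n.
  elim: N' => [|N' IH].
    have -> : xN 0 = fun k => 0 * xN 0 k by apply/funext => k; rewrite mul0r /xN big_nil.
    by rewrite HZ //; apply/funext => k; rewrite mul0r big_nil.
  have -> : xN N'.+1 = fun k => xN N' k + (fun k => y N' * basis_vec R N' k) k.
    by apply/funext => k; rewrite /xN big_nat_recr.
  rewrite HD //; apply/funext => m; rewrite IH big_nat_recr //=.
  have e1 : (fun k => basis_vec R N' k) = basis_vec R N' by [].
  rewrite (HZ (y N') (basis_vec R N')); last first.
    by rewrite /in_l2 (@l2sq_fin _ _ N'.+1) ?ltry // => k kN; rewrite /basis_vec gtn_eqF.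
  by rewrite /mat_entry mulrC.
have h1 := @l2sq_ge _ (A (xN N)) K.
have := le_trans h1 (HM _ (xN_l2 N)); rewrite Aval.
rewrite (@l2sq_fin _ _ N); last by move=> k kN; rewrite /xN basis_sum ltnNge kN.
rewrite -EFinM lee_fin; congr (_ <= _ * _).
by rewrite big_nat [RHS]big_nat; apply: eq_bigr => k /andP[_ kN]; rewrite /xN basis_sum kN.
Qed.

Import numFieldNormedType.Exports.

Section Build.
Variables (R : realType) (b : nat -> nat -> R[i]).

Definition Bop (x : nat -> R[i]) : nat -> R[i] := fun m =>
  ((limn (series (fun n => (cRe (b m n * x n) : R)))) +i* (limn (series (fun n => (cIm (b m n * x n) : R)))))%C.

Lemma seriesE (u : nat -> R) N : series u N = \sum_(0 <= k < N) u k.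
Proof. by []. Qed.

Lemma l2_cvg (x : nat -> R[i]) : in_l2 x -> cvgn (series (fun k => csq (x k))).
Proof. by move=> h; apply: nnseries_is_cvg => // k; exact: csq_ge0. Qed.

Variable M : R.
Hypothesis M0 : 0 <= M.
Hypothesis HB : forall (x : nat -> R[i]) K N,
  \sum_(0 <= m < K) csq (\sum_(0 <= n < N) b m n * x n) <= M ^+ 2 * \sum_(0 <= n < N) csq (x n).

Lemma sum_low (V : zmodType) (f : nat -> V) N1 N2 : (N1 <= N2)%N ->
  (forall n, (n < N1)%N -> f n = 0) -> \sum_(0 <= n < N2) f n = \sum_(N1 <= n < N2) f n.
Proof.
move=> h h0; rewrite (big_cat_nat (n := N1)) //= [X in X + _]big_nat big1 ?add0r //.
Qed.

Lemma HBrange (x : nat -> R[i]) m N1 N2 :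
  csq (\sum_(N1 <= n < N2) b m n * x n) <= M ^+ 2 * \sum_(N1 <= n < N2) csq (x n).
Proof.
case: (leqP N1 N2) => h; last first.
  by rewrite !big_geq ?(ltnW h) // /csq /= expr0n /= addr0 mulr0.
pose x' n := if (N1 <= n)%N then x n else 0.
have := HB x' m.+1 N2.
rewrite big_nat_recr //= (@sum_low _ (fun n => csq (x' n)) N1) //; last first.
  by move=> n nN; rewrite /x' leqNgt nN /csq /= expr0n /= addr0.
rewrite (@sum_low _ (fun n => b m n * x' n) N1) //; last first.
  by move=> n nN; rewrite /x' leqNgt nN mulr0.
rewrite (eq_big_nat _ _ (F1 := fun n => csq (x' n)) (F2 := fun n => csq (x n))); last by move=> n /andP[hn _]; rewrite /x' hn.
rewrite (eq_big_nat _ _ (F1 := fun n => b m n * x' n) (F2 := fun n => b m n * x n)); last by move=> n /andP[hn _]; rewrite /x' hn.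
apply: le_trans; rewrite lerDr; apply: sumr_ge0 => i _; exact: csq_ge0.
Qed.

Lemma l2sqE (x : nat -> R[i]) : in_l2 x -> l2sq x = (limn (series (fun k => csq (x k))))%:E.
Proof.
move=> hx; have cx := @l2_cvg x hx; rewrite -(EFin_lim cx).
rewrite /l2sq; apply: congr_lim; apply/funext => N /=; by rewrite sumEFin.
Qed.

Lemma cvg_sumK (f : nat -> nat -> R) (l : nat -> R) K :
  (forall m, f m @ \oo --> l m)%classic ->
  ((fun N => \sum_(0 <= m < K) f m N) @ \oo --> \sum_(0 <= m < K) l m)%classic.
Proof.
move=> h; elim: K => [|K IH].
  rewrite big_nil; under eq_fun do rewrite big_nil; exact: cvg_cst.
rewrite big_nat_recr //=; under eq_fun do rewrite big_nat_recr //=.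
exact: cvgD.
Qed.

Lemma cvg_proj (f : R[i] -> R) (x : nat -> R[i]) m : in_l2 x ->
  (forall z, f z ^+ 2 <= csq z) ->
  (forall (r : seq nat) (F : nat -> R[i]), f (\sum_(i <- r) F i) = \sum_(i <- r) f (F i)) ->
  cvgn (series (fun n => f (b m n * x n))).
Proof.
move=> hx hf hsum.
have cx := @l2_cvg x hx.
apply/cauchy_cvgP/cauchy_seriesP => e e0.
pose e' := e ^+ 2 / (M ^+ 2 + 1).
have M1 : 0 < M ^+ 2 + 1 by apply: ltr_wpDl (sqr_ge0 M) ltr01.
have e'0 : 0 < e' by apply: divr_gt0 => //; exact: exprn_gt0.
have := (cauchy_seriesP _).1 (cvg_cauchy _ cx) e' e'0.
have FF : Filter (series (fun k : nat => csq (x k)) @ \oo)%classic by apply: fmap_filter.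
move=> /(_ FF) H.
apply: filterS H => -[n1 n2] /= hc.
rewrite -hsum.
set z := \sum_(n1 <= k < n2) b m k * x k.
have h1 : f z ^+ 2 <= M ^+ 2 * \sum_(n1 <= k < n2) csq (x k) := le_trans (hf z) (HBrange x m n1 n2).
have hs0 : 0 <= \sum_(n1 <= k < n2) csq (x k) by apply: sumr_ge0 => k _; exact: csq_ge0.
rewrite ger0_norm // in hc.
have h2 : M ^+ 2 * \sum_(n1 <= k < n2) csq (x k) <= M ^+ 2 * e'.
  by apply: ler_wpM2l; [exact: sqr_ge0 | exact: ltW].
have E : e ^+ 2 = M ^+ 2 * e' + e' by rewrite /e'; field; rewrite gt_eqF.
have h3 : `|f z| ^+ 2 < e ^+ 2 by rewrite (real_normK (num_real (f z))) E; lra.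
have := normr_ge0 (f z); nra.
Qed.

Lemma cvgRe x m : in_l2 x -> cvgn (series (fun n => cRe (b m n * x n))).
Proof.
move=> hx; apply: cvg_proj => //.
- by move=> z; rewrite /csq lerDl sqr_ge0.
- by move=> r F; apply: (big_morph _ (@cReD R)).
Qed.

Lemma cvgIm x m : in_l2 x -> cvgn (series (fun n => cIm (b m n * x n))).
Proof.
move=> hx; apply: cvg_proj => //.
- by move=> z; rewrite /csq lerDr sqr_ge0.
- by move=> r F; apply: (big_morph _ (@cImD R)).
Qed.

Lemma BopD x y : in_l2 x -> in_l2 y ->
  Bop (fun k => x k + y k) = fun k => Bop x k + Bop y k.
Proof.
move=> hx hy; apply/funext => m; rewrite /Bop.
have eR : (fun n => cRe (b m n * (x n + y n))) = (fun n => cRe (b m n * x n)) + (fun n => cRe (b m n * y n)).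
  by apply/funext => n; rewrite mulrDr cReD.
have eI : (fun n => cIm (b m n * (x n + y n))) = (fun n => cIm (b m n * x n)) + (fun n => cIm (b m n * y n)).
  by apply/funext => n; rewrite mulrDr cImD.
rewrite eR eI !seriesD limD; [|exact: cvgRe|exact: cvgRe].
rewrite limD; [|exact: cvgIm|exact: cvgIm].
by [].
Qed.

Lemma BopZ (c : R[i]) x : in_l2 x ->
  Bop (fun k => c * x k) = fun k => c * Bop x k.
Proof.
move=> hx; apply/funext => m; rewrite /Bop.
have eR : (fun n => cRe (b m n * (c * x n))) =
   cRe c *: (fun n => cRe (b m n * x n)) - cIm c *: (fun n => cIm (b m n * x n)).
  by apply/funext => n; rewrite mulrCA cReM.
have eI : (fun n => cIm (b m n * (c * x n))) =
   cRe c *: (fun n => cIm (b m n * x n)) + cIm c *: (fun n => cRe (b m n * x n)).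
  by apply/funext => n; rewrite mulrCA cImM.
rewrite eR eI !seriesD seriesN !seriesZ.
have cU := cvgRe x m hx; have cV := cvgIm x m hx.
rewrite limD; [| exact: is_cvgZl_tmp cU | apply: is_cvgN; exact: is_cvgZl_tmp cV].
rewrite limN; [| exact: is_cvgZl_tmp cV].
rewrite limD; [| exact: is_cvgZl_tmp cV | exact: is_cvgZl_tmp cU].
rewrite !limZl_tmp //.
set u := limn (series (fun n => cRe (b m n * x n))).
set v := limn (series (fun n => cIm (b m n * x n))).
clearbody u v; case: c {eR eI} => ca cb.
rewrite /GRing.scale /=.
apply/eqP; rewrite eq_complex /=; apply/andP; split; apply/eqP; ring.
Qed.
Lemma Bop_bound x : in_l2 x -> (l2sq (Bop x) <= (M ^+ 2)%:E * l2sq x)%E.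
Proof.
move=> hx; have cx := @l2_cvg x hx.
set T := limn (series (fun k => csq (x k))).
have Tge N : \sum_(0 <= k < N) csq (x k) <= T.
  apply: (nondecreasing_cvgn_le _ cx).
  by apply: nondecreasing_series => n _ _; exact: csq_ge0.
have Kb K : \sum_(0 <= m < K) csq (Bop x m) <= M ^+ 2 * T.
  pose u m := series (fun n => cRe (b m n * x n)).
  pose v m := series (fun n => cIm (b m n * x n)).
  have G : ((fun N => \sum_(0 <= m < K) (u m N ^+ 2 + v m N ^+ 2)) @ \oo -->
            \sum_(0 <= m < K) (limn (u m) ^+ 2 + limn (v m) ^+ 2))%classic.
    apply: cvg_sumK => m.
    have -> : (fun N => u m N ^+ 2 + v m N ^+ 2) = (u m \* u m) + (v m \* v m).
      by apply/funext => N; rewrite !expr2.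
    have hu : (u m @ \oo --> limn (u m))%classic by exact: (cvgRe x m hx).
    have hv : (v m @ \oo --> limn (v m))%classic by exact: (cvgIm x m hx).
    rewrite [limn (u m) ^+ 2]expr2 [limn (v m) ^+ 2]expr2.
    exact: (cvgD (cvgM hu hu) (cvgM hv hv)).
  have -> : \sum_(0 <= m < K) csq (Bop x m) = \sum_(0 <= m < K) (limn (u m) ^+ 2 + limn (v m) ^+ 2) by [].
  rewrite -(cvg_lim _ G) //; apply: limr_le; first by apply/cvg_ex; eexists; exact: G.
  apply: nearW => N.
  have -> : \sum_(0 <= m < K) (u m N ^+ 2 + v m N ^+ 2) = \sum_(0 <= m < K) csq (\sum_(0 <= n < N) b m n * x n).
    by apply: eq_bigr => m _; rewrite /csq (@Re_sum R) (@Im_sum R).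
  apply: le_trans (HB x K N) _; apply: ler_wpM2l; [exact: sqr_ge0 | exact: Tge].
rewrite (@l2sqE x hx) -EFinM /l2sq; apply: lime_le.
  by apply: is_cvg_nneseries => n _ _; rewrite lee_fin csq_ge0.
by apply: nearW => K; rewrite sumEFin lee_fin; exact: Kb.
Qed.
Lemma Bop_l2 x : in_l2 x -> in_l2 (Bop x).
Proof.
move=> hx; rewrite /in_l2.
have h := Bop_bound x hx.
rewrite (@l2sqE x hx) -EFinM in h.
exact: (le_lt_trans h (ltry _)).
Qed.
End Build.

Lemma basis_sum2 (R : realType) (y : nat -> R[i]) N n :
  \sum_(0 <= k < N) y k * basis_vec R n k = if (n < N)%N then y n else 0.
Proof.
elim: N => [|N IH]; first by rewrite big_nil.
rewrite big_nat_recr //= IH /basis_vec ltnS.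
by case: (ltngtP n N) => h /=; rewrite ?mulr0 ?addr0 ?mulr1 ?add0r // h.
Qed.

Lemma Bop_entry (R : realType) (b : nat -> nat -> R[i]) m n : mat_entry (@Bop R b) m n = b m n.
Proof.
rewrite /mat_entry /Bop.
have E (f : R[i] -> R) : (forall (r : seq nat) (F : nat -> R[i]), f (\sum_(i <- r) F i) = \sum_(i <- r) f (F i)) ->
    f 0 = 0 ->
    limn (series (fun k => f (b m k * basis_vec R n k))) = f (b m n).
  move=> hs h0; apply: lim_near_cst => //; near=> N.
  rewrite (@seriesE R) -hs basis_sum2.
  suff -> : (n < N)%N by [].
  by near: N; exists n.+1.
rewrite (E (@complex.Re R)) ?(E (@complex.Im R)) //.
- by case: (b m n).
- by move=> r F; apply: (big_morph _ (@cImD R)).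
- by move=> r F; apply: (big_morph _ (@cReD R)).
Unshelve. all: by end_near.
Qed.



Theorem mainTheorem11 (R : realType) (A : (nat -> R[i]) -> (nat -> R[i]))
    (d : nat -> R) :
  bounded_op A ->
  (forall n, 0 < d n) ->
  (forall m n, d m < d n -> mat_entry A m n = 0) ->
  exists B : (nat -> R[i]) -> (nat -> R[i]),
    bounded_op B /\
    (forall m n, mat_entry B m n = ((d m)^-1)%:C%C * mat_entry A m n * (d n)%:C%C) /\
    (forall M : R, bounded_by A M -> bounded_by B M).
Proof.
move=> [hlin [M1 hM1]] hd htri.
pose b := fun m n => ((d m)^-1)%:C%C * mat_entry A m n * (d n)%:C%C.
have HBall : forall M, bounded_by A M -> forall (x : nat -> R[i]) K N,
    \sum_(0 <= m < K) csq (\sum_(0 <= n < N) b m n * x n) <= M ^+ 2 * \sum_(0 <= n < N) csq (x n).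
  by move=> M hM; exact: (@core R (mat_entry A) d M hd htri (@A_fin R A M hlin hM)).
have HB1 := HBall M1 hM1.
exists (Bop R b); split; [split; [split; [|split]|] | split].
- by move=> x hx; exact: (@Bop_l2 R b M1 HB1 x hx).
- by move=> x y hx hy; exact: (@BopD R b M1 HB1 x y hx hy).
- by move=> c x hx; exact: (@BopZ R b M1 HB1 c x hx).
- exists M1; split; first by case: hM1.
  by move=> x hx; exact: (@Bop_bound R b M1 HB1 x hx).
- by move=> m n; rewrite Bop_entry.
- move=> M [M0 hM]; split => // x hx.
  exact: (@Bop_bound R b M (HBall M (conj M0 hM)) x hx).
Qed.
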